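(* Let $N\ge3$ be odd, let $A=A(h)$ and $C=e_2^T$ be as in the context, and assume $h_\alpha,h_\beta,h_1,\dots,h_{N-1}$ are all nonzero. Let $P$ be the $(N+2)\times(N+2)$ matrix whose first $N+1$ rows are $C,CA,\dots,CA^{N}$ and whose last row is $(0,\dots,0,1)$, partitioned as $$P=\begin{pmatrix}\bar P & \mathbf p\\ \mathbf 0^T & 1\end{pmatrix},\qquad \bar P\in\mathbb{R}^{(N+1)\times(N+1)},\ \mathbf p\in\mathbb{R}^{N+1}.$$ Then: (i) $\mathbf p=\big(0,\dots,0,\ h_\beta\prod_{i=1}^{N-1}h_i\big)^T$; (ii) $\det\bar P=h_\alpha h_\beta^{N-1}h_{N-2}^3\prod_{i=1}^{(N-3)/2}h_{2i-1}^{N+2-2i}h_{2i}^{N-1-2i}\neq0$; (iii) with $K=h_\beta^{N-1}\prod_{i=1}^{N-2}h_i^{N-1-i}$, the last ($(N+1)$-th) column of $\bar P^{-1}$ has entries $(\bar P^{-1})_{k,N+1}=0$ for every even $k$, $(\bar P^{-1})_{1,N+1}=-K/\det\bar P$, and for odd $k$ with $3\le k\le N$, $$(\bar P^{-1})_{k,N+1}=-\frac{K}{\det\bar P}\cdot\frac{h_\alpha\prod_{j=1}^{(k-3)/2}h_{2j-1}}{h_\beta\prod_{j=1}^{(k-3)/2}h_{2j}}.$$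
   Context: For an integer $N\ge1$ and real parameters $h=(h_\alpha,h_\beta,h_1,\dots,h_{N-1})$, set $(c_1,c_2,c_3,\dots,c_{N+1})=(h_\alpha,h_\beta,h_1,\dots,h_{N-1})$ and let $A(h)$ be the real $(N+2)\times(N+2)$ tridiagonal matrix with $A_{j,j+1}=c_j$, $A_{j+1,j}=-c_j$ for $j=1,\dots,N+1$ and all other entries zero. $e_j$ denotes the $j$-th standard basis column vector; empty products equal $1$. *)

(* Defs.v *)
(* Indices are 0-based: paper index k corresponds to k-1 here. *)
From HB Require Import structures.
From mathcomp Require Import all_boot all_order all_algebra.
Set Implicit Arguments. Unset Strict Implicit. Unset Printing Implicit Defensive.
Import Order.TTheory GRing.Theory Num.Theory.
Local Open Scope ring_scope.

Section Defs.
Variable R : realFieldType.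

(* (c_1, c_2, c_3, ..., c_{N+1}) = (ha, hb, h_1, ..., h_{N-1});
   cc k = c_{k+1} (0-based), hs j = h_j (1-based as in the paper). *)
Definition cc (ha hb : R) (hs : nat -> R) (k : nat) : R :=
  match k with 0 => ha | 1 => hb | k'.+1 => hs k' end.

Definition Amat (N : nat) (ha hb : R) (hs : nat -> R) : 'M[R]_(N.+2) :=
  \matrix_(i, j) (if (j : nat) == i.+1 then cc ha hb hs i
                  else if (i : nat) == j.+1 then - cc ha hb hs j else 0).

Definition Cvec (N : nat) : 'rV[R]_(N.+2) := \row_(j < N.+2) ((j : nat) == 1%N)%:R.

Definition Pmat (N : nat) (ha hb : R) (hs : nat -> R) : 'M[R]_(N.+2) :=
  \matrix_(i < N.+2, j < N.+2)
    (if (i < N.+1)%N then (Cvec N *m Amat N ha hb hs ^+ i) 0 j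
     else ((j : nat) == N.+1)%:R).

Definition Pbar (N : nat) (ha hb : R) (hs : nat -> R) : 'M[R]_(N.+1) :=
  \matrix_(i < N.+1, j < N.+1)
    Pmat N ha hb hs (widen_ord (leqnSn _) i) (widen_ord (leqnSn _) j).

Definition pvec (N : nat) (ha hb : R) (hs : nat -> R) : 'cV[R]_(N.+1) :=
  \col_(i < N.+1) Pmat N ha hb hs (widen_ord (leqnSn _) i) ord_max.

End Defs.

(* Main.v *)
Require Import Defs.
From HB Require Import structures.
From mathcomp Require Import all_boot all_order all_algebra.
From mathcomp Require Import zify ring lra.
Import Order.TTheory GRing.Theory Num.Theory.
Set Implicit Arguments. Unset Strict Implicit. Unset Printing Implicit Defensive.
Local Open Scope ring_scope.

Section Pf.
Variable R : realFieldType.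
Variables (N : nat) (ha hb : R) (hs : nat -> R).
Local Notation A := (Amat N ha hb hs).
Local Notation c := (cc ha hb hs).

Definition rr (i : nat) : 'rV[R]_(N.+2) := Cvec R N *m A ^+ i.
Definition dd (i : nat) : R := \prod_(1 <= k < i.+1) c k.

Lemma rrS i : rr i.+1 = rr i *m A.
Proof. by rewrite /rr exprSr -mulmxE mulmxA. Qed.

Lemma rr_zero i (j : 'I_N.+2) : (i.+1 < j)%N -> rr i 0 j = 0.
Proof.
elim: i j => [|i IH] j hj.
  by rewrite /rr expr0 mulmx1 mxE; case: eqP => // E; lia.
rewrite rrS mxE big1 // => k _.
case: (ltnP i.+1 k) => hk; first by rewrite IH ?mul0r.
rewrite [X in _ * X]mxE ifN_eq; last by apply/eqP; lia.
by rewrite ifN_eq ?mulr0 //; apply/eqP; lia.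
Qed.

Lemma rr_diag i (j : 'I_N.+2) : (j : nat) = i.+1 -> rr i 0 j = dd i.
Proof.
elim: i j => [|i IH] j hj.
  by rewrite /rr expr0 mulmx1 mxE hj /dd big_geq.
have hk : (i.+1 < N.+2)%N by have := ltn_ord j; lia.
rewrite rrS mxE (bigD1 (Ordinal hk)) //= big1 ?addr0.
  rewrite (IH (Ordinal hk)) // mxE hj eqxx /dd (big_nat_recr i.+1) //.
move=> k /eqP hne.
have hne' : (k : nat) <> i.+1 by move=> E; apply: hne; apply: val_inj.
case: (ltnP i.+1 k) => hk2; first by rewrite rr_zero ?mul0r.
rewrite [X in _ * X]mxE ifN_eq; last by apply/eqP; lia.
by rewrite ifN_eq ?mulr0 //; apply/eqP; lia.
Qed.


Fixpoint yf (k : nat) : R :=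
  match k with 0 => 1 | 1 => 0 | k'.+2 => c k' * yf k' / c k'.+1 end.

Lemma yfSS k : yf k.+2 = c k * yf k / c k.+1.
Proof. by []. Qed.

Lemma yf_odd k : odd k -> yf k = 0.
Proof.
have H : forall m, yf m.*2.+1 = 0.
  by elim=> [|m IH] //; rewrite doubleS yfSS IH mulr0 mul0r.
by move=> ok; rewrite -(odd_double_half k) ok add1n H.
Qed.

Lemma sum_if_eq n (a : nat) (x : R) :
  \sum_(k < n) (if (k : nat) == a then x else 0) = if (a < n)%N then x else 0.
Proof.
case: ltnP => ha'.
  rewrite (bigD1 (Ordinal ha')) //= eqxx big1 ?addr0 // => k /eqP hk.
  by rewrite ifN_eq //; apply/eqP => E; apply: hk; apply: val_inj.
by rewrite big1 // => k _; rewrite ifN_eq //; apply/eqP => E; have := ltn_ord k; lia.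
Qed.

Lemma A_col (f : nat -> R) (i : 'I_N.+2) :
  (A *m \col_(k < N.+2) f k) i 0 =
  (if (i.+1 < N.+2)%N then c i * f i.+1 else 0) -
  (if (0 < i)%N then c i.-1 * f i.-1 else 0).
Proof.
rewrite mxE.
transitivity (\sum_(k < N.+2) ((if (k : nat) == i.+1 then c i * f i.+1 else 0) -
   (if (k : nat) == i.-1 then (if (0 < i)%N then c i.-1 * f i.-1 else 0) else 0))).
  apply: eq_bigr => k _; rewrite !mxE.
  case: eqP => h1.
    rewrite h1 ifN_eq ?subr0 //; apply/eqP; lia.
  case: eqP => h2.
    rewrite ifT; last by apply/eqP; lia.
    by rewrite ifT ?sub0r ?mulNr //; [rewrite h2 | lia].
  rewrite mul0r.
  case: eqP => h3; last by rewrite subr0.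
  by rewrite ifN ?subr0 //; lia.
rewrite big_split /= sumrN !sum_if_eq; congr (_ - _).
by rewrite ifT //; have := ltn_ord i; lia.
Qed.


Definition ycol : 'cV[R]_(N.+2) := \col_(k < N.+2) (if (k < N.+1)%N then yf k else 0).
Definition gam : R := - (c N.-1 * yf N.-1).

Lemma Ay (HN3 : (3 <= N)%N) (HNodd : odd N)
  (Hc : forall i, (1 <= i <= N.-1)%N -> c i != 0) :
  A *m ycol = \col_(k < N.+2) (if (k : nat) == N then gam else 0).
Proof.
apply/matrixP => i j; rewrite ord1 /ycol (A_col (fun k => if (k < N.+1)%N then yf k else 0)) !mxE.
case: i => [i hi] /=.
case: i hi => [|i] hi.
  by rewrite if_same mulr0 subr0; case: eqP => //; lia.
rewrite !succnK.
case: (ltngtP i.+1 N) => h.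
- rewrite ifT; last lia. rewrite ifT; last lia. rewrite ifT; last lia.
  rewrite (_ : (0 < i.+1)%N = true) // -[X in _ / X]/(c i.+1) mulrCA divff ?mulr1 ?subrr //.
  by have := Hc i.+1; apply; lia.
- rewrite (_ : (i.+2 < N.+2)%N = false); last lia.
  rewrite (_ : (0 < i.+1)%N = true) // (_ : (i < N.+1)%N = true); last lia.
  have -> : i = N by lia.
  by rewrite yf_odd // mulr0 subr0.
- have hN : (i.+2 < N.+2)%N by lia.
  have hN' : (i.+2 < N.+1)%N = false by lia.
  rewrite hN hN' /= (_ : (i < N.+1)%N = true); last lia.
  by rewrite mulr0 sub0r /gam -h.
Qed.


Lemma rr_y (HN3 : (3 <= N)%N) (HNodd : odd N)
  (Hc : forall i, (1 <= i <= N.-1)%N -> c i != 0) (i : nat) :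
  (i <= N)%N -> (rr i *m ycol) 0 0 = if i == N then gam * dd N.-1 else 0.
Proof.
case: i => [|i] hi.
  rewrite ifN; last by apply/eqP; lia.
  rewrite /rr expr0 mulmx1 mxE big1 // => j _; rewrite !mxE.
  case: eqP => hj; last by rewrite mul0r.
  by rewrite hj /= if_same mulr0.
rewrite rrS -mulmxA Ay // mxE.
have hN : (N < N.+2)%N by [].
rewrite (bigD1 (Ordinal hN)) //= big1 ?addr0; last first.
  move=> k /eqP hk; rewrite mxE ifN ?mulr0 //; apply/eqP => E; apply: hk.
  exact: val_inj.
rewrite mxE eqxx.
case: eqP => hiN.
  by rewrite (rr_diag (j := Ordinal hN)) //= -hiN mulrC.
by rewrite rr_zero ?mul0r //=; lia.
Qed.

Lemma Pbar_E (i j : 'I_N.+1) : Pbar N ha hb hs i j = rr i 0 (widen_ord (leqnSn _) j).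
Proof. by rewrite !mxE /= ltn_ord. Qed.

Definition ycol' : 'cV[R]_(N.+1) := \col_(k < N.+1) yf k.

Lemma Pby (i : 'I_N.+1) : (Pbar N ha hb hs *m ycol') i 0 = (rr i *m ycol) 0 0.
Proof.
rewrite mxE [in RHS]mxE [in RHS]big_ord_recr /= [ycol ord_max 0]mxE /= ltnn mulr0 addr0.
by apply: eq_bigr => j _; rewrite Pbar_E !mxE /= ltn_ord.
Qed.


Definition Qm : 'M[R]_(N.+1) :=
  \matrix_(i, j) (if j == ord0 then yf i else (i == j)%:R).

Lemma det_Qm : \det Qm = 1.
Proof.
rewrite det_trig; last first.
  apply/is_trig_mxP => i j hij; rewrite mxE.
  case: eqP => [E|_]; first by rewrite E in hij.
  by case: eqP => // E; rewrite E ltnn in hij.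
apply: big1 => i _; rewrite mxE eqxx; case: eqP => // ->; by [].
Qed.

Lemma PQ_E (i j : 'I_N.+1) : (Pbar N ha hb hs *m Qm) i j =
  if j == ord0 then (Pbar N ha hb hs *m ycol') i 0 else Pbar N ha hb hs i j.
Proof.
rewrite mxE; case: eqP => hj.
  by rewrite mxE; apply: eq_bigr => k _; rewrite !mxE hj eqxx.
rewrite (bigD1 j) //= big1 ?addr0.
  by rewrite [Qm j j]mxE (introF eqP hj) eqxx mulr1.
move=> k hk; rewrite [Qm k j]mxE (introF eqP hj); case: eqP => E; last by rewrite mulr0.
by rewrite E eqxx in hk.
Qed.

Lemma det_Pbar (HN3 : (3 <= N)%N) (HNodd : odd N)
  (Hc : forall i, (1 <= i <= N.-1)%N -> c i != 0) :
  \det (Pbar N ha hb hs) = - (gam * dd N.-1) * \prod_(i < N) dd i.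
Proof.
have -> : \det (Pbar N ha hb hs) = \det (Pbar N ha hb hs *m Qm).
  by rewrite det_mulmx det_Qm mulr1.
rewrite (expand_det_col _ ord0) (bigD1 ord_max) //= big1 ?addr0; last first.
  move=> i hi; rewrite PQ_E eqxx Pby rr_y //; last by have := ltn_ord i; lia.
  rewrite ifN ?mul0r //; apply/eqP => E; move/eqP: hi; apply; apply: val_inj; by rewrite /= E.
rewrite PQ_E eqxx Pby rr_y // eqxx /cofactor.
rewrite -signr_odd addn0 HNodd expr1 mulNr mul1r mulrN -mulNr; congr (_ * _).
have bumpN : forall i : 'I_N.+1.-1, bump N i = i.
  by move=> i; rewrite /bump leqNgt ltn_ord.
have hL : forall j : 'I_N.+1.-1, (lift ord0 j == ord0 :> 'I_N.+1) = false.
  by move=> j'; apply/negbTE; rewrite eq_sym neq_lift.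
rewrite det_trig; last first.
  apply/is_trig_mxP => i j hij; rewrite 2!mxE PQ_E hL Pbar_E.
  by rewrite rr_zero //= bumpN /bump leq0n add1n ltnS.
apply: eq_bigr => i _; rewrite 2!mxE PQ_E hL Pbar_E.
by rewrite /= bumpN (rr_diag (i := i)) //=.
Qed.


Lemma inv_col (HN3 : (3 <= N)%N) (HNodd : odd N)
  (Hc : forall i, (1 <= i <= N.-1)%N -> c i != 0)
  (HU : Pbar N ha hb hs \in unitmx) (Hb : gam * dd N.-1 != 0) (k : 'I_N.+1) :
  invmx (Pbar N ha hb hs) k ord_max = yf k / (gam * dd N.-1).
Proof.
set P := Pbar N ha hb hs; set b := gam * dd N.-1.
have E : P *m ycol' = b *: \col_(i < N.+1) ((i == ord_max)%:R : R).
  apply/matrixP => i j; rewrite ord1 Pby rr_y //; last by have := ltn_ord i; lia.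
  rewrite !mxE; case: eqP => hi.
    by rewrite (_ : (i == ord_max) = true) ?mulr1 //; apply/eqP; apply: val_inj.
  by rewrite (_ : (i == ord_max) = false) ?mulr0 //; apply/eqP => E; apply: hi; rewrite E.
have E2 : ycol' = b *: (invmx P *m \col_(i < N.+1) ((i == ord_max)%:R : R)).
  by rewrite scalemxAr -E mulKmx.
have E3 : yf k = b * invmx P k ord_max.
  have := congr1 (fun M : 'cV_(N.+1) => M k 0) E2; rewrite !mxE => ->; congr (_ * _).
  rewrite (bigD1 ord_max) //= big1 ?addr0; first by rewrite mxE eqxx mulr1.
  by move=> j hj; rewrite mxE (negbTE hj) mulr0.
by rewrite E3 [b * _]mulrC mulfK.
Qed.


Lemma ddS n : dd n.+1 = dd n * c n.+1.
Proof. by rewrite /dd big_nat_recr. Qed.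

Lemma dd_closed n : dd n.+1 = hb * \prod_(1 <= k < n.+1) hs k.
Proof.
elim: n => [|n IH]; first by rewrite ddS /dd !big_geq // mul1r mulr1.
by rewrite ddS IH (big_nat_recr n.+1) //= mulrA.
Qed.

Lemma prod_dd n : \prod_(i < n.+1) dd i = hb ^+ n * \prod_(1 <= k < n) hs k ^+ (n - k).
Proof.
elim: n => [|n IH]; first by rewrite big_ord1 /dd !big_geq // expr0 mulr1.
rewrite big_ord_recr /= IH dd_closed exprS.
case: n IH => [|n] IH.
  by rewrite !big_geq // expr0; ring.
rewrite [in RHS](big_nat_recr n.+1) //= (big_nat_recr n.+1) //=.
rewrite (_ : (n.+2 - n.+1 = 1)%N); last lia.
rewrite (@eq_big_nat _ _ _ 1 n.+1 (fun k => hs k ^+ (n.+2 - k))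
           (fun k => hs k ^+ (n.+1 - k) * hs k)); last first.
  by move=> k hk; rewrite -exprSr subSn //; lia.
rewrite big_split /= expr1; ring.
Qed.

Lemma yf_closed m : yf (m.+1).*2 =
  ha * \prod_(1 <= j < m.+1) hs (j.*2.-1) / (hb * \prod_(1 <= j < m.+1) hs (j.*2)).
Proof.
elim: m => [|m IH]; first by rewrite !big_geq // yfSS /= !mulr1.
rewrite doubleS yfSS IH (big_nat_recr m.+1) // (big_nat_recr m.+1) //=.
rewrite doubleS /= !invfM; ring.
Qed.

End Pf.

Lemma prod_split (R : comNzRingType) (f : nat -> R) M :
  \prod_(1 <= k < M.+1.*2) f k =
  (\prod_(1 <= i < M.+1) (f (i.*2.-1) * f (i.*2))) * f (M.*2.+1).
Proof.
elim: M => [|M IH]; first by rewrite big_nat1 big_geq // mul1r.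
rewrite [M.+2.*2]doubleS (big_nat_recr (M.+1.*2).+1) // (big_nat_recr (M.+1.*2)) //.
rewrite IH [in RHS](big_nat_recr M.+1) //=; ring.
Qed.

Lemma prod_neq0 (R : idomainType) (F : nat -> R) m n :
  (forall k, (m <= k < n)%N -> F k != 0) -> \prod_(m <= k < n) F k != 0.
Proof.
move=> H; rewrite prodf_seq_neq0; apply/allP => k; rewrite mem_index_iota => hk.
exact: H.
Qed.

Theorem lemma4 (R : realFieldType) (N : nat) (ha hb : R) (hs : nat -> R)
  (HN3 : (3 <= N)%N) (HNodd : odd N)
  (Hha : ha != 0) (Hhb : hb != 0)
  (Hhs : forall i : nat, (1 <= i <= N.-1)%N -> hs i != 0) :
  let P := Pbar N ha hb hs in
  let K := hb ^+ N.-1 * \prod_(1 <= i < N.-1) hs i ^+ (N.-1 - i) in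
  (* (i) *)
  pvec N ha hb hs =
    \col_(i < N.+1) (if (i : nat) == N then hb * \prod_(1 <= i < N) hs i else 0)
  (* (ii) *)
  /\ \det P = ha * hb ^+ N.-1 * hs (N - 2)%N ^+ 3 *
        \prod_(1 <= i < ((N - 3)./2).+1)
           (hs (i.*2.-1) ^+ (N.+2 - i.*2) * hs (i.*2) ^+ (N.-1 - i.*2))
  /\ \det P != 0
  (* (iii); row k0 (0-based) is paper row k = k0+1 *)
  /\ (forall k0 : 'I_N.+1, ~~ odd k0.+1 -> invmx P k0 ord_max = 0)
  /\ invmx P ord0 ord_max = - K / \det P
  /\ (forall k0 : 'I_N.+1, odd k0.+1 -> (3 <= k0.+1 <= N)%N ->
        invmx P k0 ord_max =
          - K / \det P *
          ((ha * \prod_(1 <= j < ((k0.+1 - 3)./2).+1) hs (j.*2.-1)) /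
           (hb * \prod_(1 <= j < ((k0.+1 - 3)./2).+1) hs (j.*2)))).
Proof.
move=> P K.
have Hc : forall i, (1 <= i <= N.-1)%N -> cc ha hb hs i != 0.
  case=> [|[|i]] hi //; apply: Hhs; lia.
have [M eN] : exists M, N = M.+1.*2.+1.
  have h := odd_double_half N; rewrite HNodd add1n in h.
  exists (N./2).-1; rewrite prednK; lia.
have eN1 : N.-1 = M.+1.*2 by rewrite eN.
have hdd : dd ha hb hs N.-1 != 0.
  rewrite eN1 doubleS dd_closed mulf_neq0 //; apply: prod_neq0 => k hk; apply: Hhs; lia.
have hyf : yf ha hb hs N.-1 != 0.
  rewrite eN1 yf_closed !mulf_neq0 ?invr_neq0 ?mulf_neq0 //;
    apply: prod_neq0 => k hk; apply: Hhs; lia.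
have hcN : cc ha hb hs N.-1 != 0 by apply: Hc; lia.
have hK : K != 0.
  rewrite /K mulf_neq0 ?expf_neq0 //; apply: prod_neq0 => k hk.
  by rewrite expf_neq0 //; apply: Hhs; lia.
have hb0 : gam N ha hb hs * dd ha hb hs N.-1 != 0.
  by rewrite mulf_neq0 // /gam oppr_eq0 mulf_neq0.
have hKK : \prod_(i < N) dd ha hb hs i = K.
  by rewrite /K -(prod_dd ha hb hs N.-1) prednK //; lia.
have hdet : \det P = - (gam N ha hb hs * dd ha hb hs N.-1) * K.
  by rewrite /P det_Pbar // hKK.
have hdet0 : \det P != 0 by rewrite hdet mulf_neq0 // oppr_eq0.
have HU : P \in unitmx by rewrite unitmxE unitfE.
split.
  apply/matrixP => i j; rewrite ord1.
  have -> : pvec N ha hb hs i 0 = rr N ha hb hs i 0 ord_max by rewrite !mxE /= ltn_ord.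
  rewrite [RHS]mxE; case: eqP => h.
    rewrite (@rr_diag _ _ _ _ _ i) /= ?h //.
    have -> : N = (N.-1).+1 by lia.
    by rewrite dd_closed.
  by rewrite rr_zero //=; have := ltn_ord i; lia.
split.
  pose A := \prod_(1 <= j < M.+1) hs (j.*2.-1).
  pose B := \prod_(1 <= j < M.+1) hs (j.*2).
  pose f := fun k => hs k ^+ (M.+1.*2.+1 - k).
  pose U := \prod_(1 <= i < M.+1) hs (i.*2.-1) ^+ (M.+1.*2.+1 - i.*2.-1).
  pose V := \prod_(1 <= i < M.+1) hs (i.*2) ^+ (M.+1.*2 - i.*2).
  pose Pk := \prod_(1 <= k < M.+1.*2) hs k.
  pose Q := \prod_(1 <= k < M.+1.*2) hs k ^+ (M.+1.*2 - k).
  have hB : B != 0 by apply: prod_neq0 => k hk; apply: Hhs; lia.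
  have hcc : cc ha hb hs (M.+1.*2) = hs (M.*2.+1) by rewrite doubleS.
  have hdd' : dd ha hb hs (M.+1.*2) = hb * Pk by rewrite [M.+1.*2]doubleS dd_closed.
  have hG1 : Pk * Q = \prod_(1 <= k < M.+1.*2) f k.
    rewrite -big_split; apply: eq_big_nat => k hk; rewrite /f subSn ?exprS //; lia.
  have hG3 : \prod_(1 <= i < M.+1) (f (i.*2.-1) * f (i.*2)) = U * (V * B).
    rewrite -!big_split; apply: eq_big_nat => i hi /=.
    rewrite /f (subSn (_ : (i.*2 <= M.+1.*2)%N)) ?exprSr ?mulrA //; lia.
  have hf : f (M.*2.+1) = hs (M.*2.+1) ^+ 2.
    by rewrite /f (_ : (M.+1.*2.+1 - M.*2.+1 = 2)%N) //; lia.
  have hr : ((N - 3)./2).+1 = M.+1.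
    by rewrite eN (_ : (M.+1.*2.+1 - 3 = M.*2)%N) ?doubleK //; lia.
  have hT : \prod_(1 <= i < ((N - 3)./2).+1)
           (hs (i.*2.-1) ^+ (N.+2 - i.*2) * hs (i.*2) ^+ (N.-1 - i.*2)) = U * A * V.
    rewrite hr -!big_split; apply: eq_big_nat => i hi /=.
    rewrite eN1 (_ : (N.+2 - i.*2 = (M.+1.*2.+1 - i.*2.-1).+1)%N) ?exprSr //; lia.
  rewrite hT hdet /gam !mulNr opprK eN1 hcc yf_closed hdd' /K eN1 -/A -/B -/Q.
  rewrite (_ : (N - 2 = M.*2.+1)%N); last lia.
  transitivity (hs (M.*2.+1) * (ha * A / (hb * B)) * (hb * hb ^+ M.+1.*2 * (Pk * Q))).
    ring.
  rewrite hG1 prod_split hG3 hf; field.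
  by rewrite hB Hhb.
split; first exact: hdet0.
split.
  move=> k0 hk; rewrite /P inv_col // yf_odd ?mul0r //.
  by move: hk; rewrite /= negbK.
split.
  rewrite /P inv_col // -/P hdet /=; field.
  by rewrite hK hdd oppr_eq0 mulf_neq0.

move=> k0 hodd hk.
have [m em] : exists m, (k0 : nat) = m.+1.*2.
  have h := odd_double_half k0; rewrite /= in hodd.
  rewrite (negbTE hodd) add0n in h.
  exists (k0./2).-1; rewrite prednK; lia.
have hr : ((k0.+1 - 3)./2).+1 = m.+1.
  by rewrite em (_ : (m.+1.*2.+1 - 3 = m.*2)%N) ?doubleK //; lia.
rewrite hr /P inv_col // -/P em yf_closed hdet; field.
have hP : \prod_(1 <= j < m.+1) hs (j.*2) != 0.
  have hk' : (m.+1.*2 < N)%N by rewrite -em; case/andP: hk.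
  apply: prod_neq0 => j hj; apply: Hhs; move: hj hk'; clear; lia.
by rewrite hP Hhb hK hdd oppr_eq0 mulf_neq0.
Qed.
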